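(* For every real $\kappa>\frac56$ there exists a doubly stochastic $2\times 2$ matrix $\mathcal M_\kappa$ such that no directed $3$-regular multigraph $G$ on $[2]$ has throughput at least $\kappa$ with respect to $\mathcal M_\kappa$ (i.e., no such $G$ hosts $\kappa\mathcal M_\kappa$).
   Context: Let $n\ge 1$ and $[n]=\{1,\dots,n\}$. Networks are finite directed multigraphs on vertex set $[n]$; self-loops and parallel arcs are allowed. A directed multigraph is directed $r$-regular if every vertex has exactly $r$ outgoing and exactly $r$ incoming arcs (a self-loop at $v$ counts as one outgoing and one incoming arc of $v$). A path is a non-empty sequence of arcs $((u_1,v_1),\dots,(u_\ell,v_\ell))$ with $v_i=u_{i+1}$ for $i<\ell$; it goes from $u_1$ to $v_\ell$ and has length $\ell\ge 1$. An $n\times n$ matrix is doubly stochastic if all entries are nonnegative and every row and every column sums to $1$. In a directed $(2n-1)$-regular multigraph $G$ on $[n]$ every arc has capacity $\frac{1}{2n-1}$. $G$ hosts a nonnegative $n\times n$ matrix $\mathcal M=(a_{i,j})$ if there is a finite collection $\{(P_k,d_k)\}$, where each $P_k$ is a path in $G$ from some $s_k$ to some $t_k$ and $d_k\ge 0$, such that $\sum_{k:\,s_k=u,\,t_k=v} d_k=a_{u,v}$ for all $u,v\in[n]$, and for every arc $e$ of $G$ (parallel arcs are distinct) $\sum_{k:\,e\in P_k} d_k\le \frac{1}{2n-1}$. The throughput of $G$ with respect to a doubly stochastic $\mathcal M$ is the largest $\theta$ such that $G$ hosts $\theta\mathcal M$. *)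

(* Defs.v *)
From HB Require Import structures.
From mathcomp Require Import all_boot all_order all_algebra.
From mathcomp Require Import reals.
Set Implicit Arguments. Unset Strict Implicit. Unset Printing Implicit Defensive.
Import Order.TTheory GRing.Theory Num.Theory.
Local Open Scope ring_scope.

(* A finite directed multigraph on [n] = 'I_n, given by arc multiplicities:
   G u v = number of (parallel) arcs from u to v; G v v = number of
   self-loops at v. *)
Definition multigraph (n : nat) := 'I_n -> 'I_n -> nat.

(* An individual arc ((u, v), k) is the k-th parallel arc from u to v,
   valid in G iff k < G u v.  Parallel arcs are thus distinct objects. *)
Definition arc (n : nat) := ('I_n * 'I_n * nat)%type.
Definition arc_src n (e : arc n) : 'I_n := e.1.1.
Definition arc_tgt n (e : arc n) : 'I_n := e.1.2.
Definition valid_arc n (G : multigraph n) (e : arc n) : bool :=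
  (e.2 < G (arc_src e) (arc_tgt e))%N.

(* Directed r-regular: every vertex has exactly r outgoing and r incoming
   arcs (a self-loop at v counts once as outgoing and once as incoming). *)
Definition directed_regular n (r : nat) (G : multigraph n) : Prop :=
  forall v : 'I_n,
    (\sum_(w < n) G v w)%N = r /\ (\sum_(u < n) G u v)%N = r.

Definition is_path_from_to n (G : multigraph n) (s t : 'I_n) (p : seq (arc n))
  : bool :=
  match p with
  | [::] => false
  | e :: p' =>
      [&& arc_src e == s, arc_tgt (last e p') == t,
          path (fun a b : arc n => arc_tgt a == arc_src b) e p'
        & all (valid_arc G) p]
  end.

(* A routing: finite collection of (path P_k from s_k to t_k, amount d_k).
   Entry ((s, t), P, d). *)
Definition routing (R : realType) n :=
  seq ('I_n * 'I_n * seq (arc n) * R)%type.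

Definition hosts (R : realType) n (G : multigraph n) (A : 'M[R]_n) : Prop :=
  exists F : routing R n,
    (forall f, f \in F -> is_path_from_to G f.1.1.1 f.1.1.2 f.1.2 /\ 0 <= f.2)
    /\ (forall u v : 'I_n,
          \sum_(f <- F | (f.1.1.1 == u) && (f.1.1.2 == v)) f.2 = A u v)
    /\ (forall e : arc n, valid_arc G e ->
          \sum_(f <- F | e \in f.1.2) f.2 <= ((2 * n - 1)%N%:R)^-1).

Definition doubly_stochastic (R : realType) n (M : 'M[R]_n) : Prop :=
  (forall i j, 0 <= M i j)
  /\ (forall i, \sum_(j < n) M i j = 1)
  /\ (forall j, \sum_(i < n) M i j = 1).

(* Main.v *)
Require Import Defs.
From HB Require Import structures.
From mathcomp Require Import all_boot all_order all_algebra.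
From mathcomp Require Import reals.

From mathcomp Require Import ring lra.
Import Order.TTheory GRing.Theory Num.Theory.
Local Open Scope ring_scope.

Definition v0 : 'I_2 := @ord0 1.
Definition v1 : 'I_2 := @ord_max 1.

Lemma I2 (x : 'I_2) : x = v0 \/ x = v1.
Proof. case: x => [[|[|m]] H]; [left|right|by []]; exact: val_inj. Qed.

Lemma v01 : (v0 == v1) = false. Proof. by []. Qed.

Definition U01 (p : seq (Defs.arc 2)) :=
  has (fun x : Defs.arc 2 => (Defs.arc_src x == v0) && (Defs.arc_tgt x == v1)) p.

Lemma path_cross (p : seq (Defs.arc 2)) (e : Defs.arc 2) :
  arc_src e = v0 -> arc_tgt (last e p) = v1 ->
  path (fun a b : Defs.arc 2 => arc_tgt a == arc_src b) e p -> U01 (e :: p).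
Proof.
elim: p e => [|e2 p IH] e hs ht hp /=.
  by rewrite hs ht !eqxx.
case: (I2 (Defs.arc_tgt e)) => he.
  move: hp => /= /andP [/eqP h1 h2].
  have := IH e2; rewrite /U01 /= => ->; first by rewrite orbT.
  - by rewrite -h1.
  - exact: ht.
  - exact: h2.
by rewrite hs he !eqxx.
Qed.

Section Load.
Variable R : realType.

Lemma load_bound (F : routing R 2%N) (u v : 'I_2) (m : nat) (c : R)
  (Pr : pred ('I_2 * 'I_2 * seq (Defs.arc 2) * R)) :
  (forall f, f \in F -> 0 <= f.2) ->
  (forall k, (k < m)%N -> \sum_(f <- F | (u, v, k) \in f.1.2) f.2 <= c) ->
  (forall f, f \in F -> Pr f -> exists2 k, (k < m)%N & (u, v, k) \in f.1.2) ->
  \sum_(f <- F | Pr f) f.2 <= m%:R * c.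
Proof.
move=> hd hc hk.
apply: (@le_trans _ _ (\sum_(k < m) \sum_(f <- F | (u, v, (val k)) \in f.1.2) f.2)).
  under [X in _ <= X]eq_bigr => k _ do rewrite big_mkcond.
  rewrite exchange_big /=.
  rewrite [X in _ <= X]big_seq_cond [X in _ <= X]big_mkcond /=.
  rewrite [X in X <= _]big_seq_cond [X in X <= _]big_mkcond /=.
  apply: ler_sum => f.
  case fF: (f \in F) => //=.
  case pf: (Pr f) => /=.
    have [k km kin] := hk f fF pf.
    rewrite (bigD1 (Ordinal km)) //= kin.
    move=> _; rewrite lerDl; apply: sumr_ge0 => i _; case: ifP => // _; exact: hd.
  move=> _; apply: sumr_ge0 => i _; case: ifP => // _; exact: hd.
rewrite mulr_natl -[in X in _ <= X](card_ord m) -sumr_const.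
by apply: ler_sum => k _; apply: hc (ltn_ord k).
Qed.
End Load.

Lemma sum3_le (R : realType) (T : eqType) (F : seq T) (d : T -> R)
  (P1 P2 P3 Q1 Q2 Q3 : pred T) :
  (forall f, f \in F ->
     (if P1 f then d f else 0) + (if P2 f then d f else 0) + (if P3 f then d f else 0)
     <= (if Q1 f then d f else 0) + (if Q2 f then d f else 0) + (if Q3 f then d f else 0)) ->
  \sum_(f <- F | P1 f) d f + \sum_(f <- F | P2 f) d f + \sum_(f <- F | P3 f) d f
  <= \sum_(f <- F | Q1 f) d f + \sum_(f <- F | Q2 f) d f + \sum_(f <- F | Q3 f) d f.
Proof.
move=> h.
rewrite (big_mkcond P1) (big_mkcond P2) (big_mkcond P3) (big_mkcond Q1)
  (big_mkcond Q2) (big_mkcond Q3) -!big_split /=.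
rewrite big_seq [X in _ <= X]big_seq.
by apply: ler_sum => f fF; apply: h.
Qed.

Lemma sum1_le (R : realType) (T : eqType) (F : seq T) (d : T -> R)
  (P1 Q1 : pred T) :
  (forall f, f \in F -> (if P1 f then d f else 0) <= (if Q1 f then d f else 0)) ->
  \sum_(f <- F | P1 f) d f <= \sum_(f <- F | Q1 f) d f.
Proof.
move=> h.
rewrite (big_mkcond P1) (big_mkcond Q1) /=.
rewrite big_seq [X in _ <= X]big_seq.
by apply: ler_sum => f fF; apply: h.
Qed.

Lemma arc_eta (x : Defs.arc 2) : x = (Defs.arc_src x, Defs.arc_tgt x, x.2).
Proof. by case: x => [[s t] k]. Qed.

Lemma arith (R : realType) (kappa s1 s2 s3 : R) (a b0 b1 : nat) :
  5 / 6 < kappa -> (b0 + a = 3)%N -> (a + b1 = 3)%N ->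
  kappa - 1 / 2 <= s1 -> kappa - 1 / 2 + 1 / 2 + 1 / 2 <= s1 + s2 + s3 ->
  s1 <= a%:R * 3^-1 -> s2 <= b0%:R * 3^-1 -> s3 <= b1%:R * 3^-1 -> False.
Proof.
move=> hk e0 e1 X1 X2 B1 B2 B3.
have ha : (a <= 3)%N by rewrite -e0 leq_addl.
have hb0 : b0 = (3 - a)%N by rewrite -e0 addnK.
have hb1 : b1 = (3 - a)%N by rewrite -e1 addKn.
rewrite hb0 hb1 natrB // in B2 B3; clear e0 e1 hb0 hb1.
move: ha B1 B2 B3; case: a => [|[|[|[|a]]]] //= _ B1 B2 B3.
- lra.
- lra.
- lra.
- lra.
Qed.

Theorem proposition3p4 (R : realType) (kappa : R) :
  5 / 6 < kappa ->
  exists M : 'M[R]_2,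
    doubly_stochastic M /\
    forall G : multigraph 2, directed_regular 3 G -> ~ hosts G (kappa *: M).
Proof.
move=> hk.
have k0 : kappa != 0 by apply/eqP => h; rewrite h in hk; lra.
pose p := (2 * kappa)^-1.
have hkp : kappa * p = 1 / 2.
  by rewrite /p; field.
have hp0 : 0 <= p by rewrite /p invr_ge0; lra.
have hp1 : p <= 1.
  rewrite /p -[X in _ <= X]invr1; rewrite lef_pV2 ?posrE; lra.
exists (\matrix_(i, j) if i == j then p else 1 - p).
split.
  split; [|split].
  - move=> i j; rewrite mxE; case: ifP => _; lra.
  - move=> i; rewrite big_ord_recr big_ord1 /= !mxE.
    by case: (I2 i) => ->; rewrite /= ?eqxx /=; lra.
  - move=> i; rewrite big_ord_recr big_ord1 /= !mxE.
    by case: (I2 i) => ->; rewrite /= ?eqxx /=; lra.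
move=> G hG [F [hF [hdem hcap]]].
have hd : forall f, f \in F -> 0 <= f.2 by move=> f /hF [].
set c := ((2 * 2 - 1)%N%:R)^-1 : R.
have hc : c = 3^-1 by [].
have [h0 _] := hG v0.
have [_ h1] := hG v1.
rewrite big_ord_recr big_ord1 /= in h0.
rewrite big_ord_recr big_ord1 /= in h1.
have capk : forall u v k, (k < G u v)%N ->
   \sum_(f <- F | (u, v, k) \in f.1.2) f.2 <= c.
  by move=> u v k hk'; apply: (hcap (u, v, k)).
have B1 : \sum_(f <- F | U01 f.1.2) f.2 <= (G v0 v1)%:R * c.
  apply: load_bound => //; first exact: capk.
  move=> f fF /hasP [x xin /andP [/eqP xs /eqP xt]].
  have [hp _] := hF f fF.
  move: hp; case: (f.1.2) xin => [|e p'] //= xin /and4P [_ _ _ hall].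
  exists x.2; last by rewrite -xs -xt -arc_eta.
  by have := allP (hall : all (valid_arc G) (e :: p')) x xin; rewrite /valid_arc xs xt.
have B2 : \sum_(f <- F | (f.1.1.1 == v0) && (f.1.1.2 == v0) && ~~ U01 f.1.2) f.2
    <= (G v0 v0)%:R * c.
  apply: load_bound => //; first exact: capk.
  move=> f fF /andP [/andP [/eqP hs /eqP ht] hU].
  have [hp _] := hF f fF.
  move: hp hU; rewrite hs ht /U01.
  case: (f.1.2) => [|e p'] //= /and4P [/eqP es _ _ /andP [ev _]].
  rewrite es /= negb_or => /andP [he _].
  case: (I2 (Defs.arc_tgt e)) => et; last by rewrite et eqxx in he.
  exists e.2; first by move: ev; rewrite /valid_arc es et.
  by move: es et; clear; case: e => [[s t] k]; rewrite /Defs.arc_src /Defs.arc_tgt /= => -> ->; rewrite mem_head.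
have B3 : \sum_(f <- F | (f.1.1.1 == v1) && (f.1.1.2 == v1) && ~~ U01 f.1.2) f.2
    <= (G v1 v1)%:R * c.
  apply: load_bound => //; first exact: capk.
  move=> f fF /andP [/andP [/eqP hs /eqP ht] hU].
  have [hp _] := hF f fF.
  move: hp hU; rewrite hs ht /U01.
  case: (f.1.2) => [|e p'] //= /and4P [_ /eqP lt _ hall] hU.
  have lin : last e p' \in e :: p' by apply: mem_last.
  case: (I2 (Defs.arc_src (last e p'))) => ls.
    have : has (fun x : Defs.arc 2 => (Defs.arc_src x == v0) && (Defs.arc_tgt x == v1)) (e :: p').
      by apply/hasP; exists (last e p') => //; rewrite ls lt !eqxx.
    by move: hU => /negbTE /= ->.
  exists (last e p').2; first by have := allP (hall : all (valid_arc G) (e :: p')) _ lin; rewrite /valid_arc ls lt.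
  suff -> : (v1, v1, (last e p').2) = last e p' by [].
  by move: ls lt; case: (last e p') => [[s t] k]; rewrite /Defs.arc_src /Defs.arc_tgt /= => -> ->.
have pc : forall f, f \in F -> (f.1.1.1 == v0) && (f.1.1.2 == v1) -> U01 f.1.2.
  move=> f fF /andP [/eqP hs /eqP ht].
  have [hp _] := hF f fF.
  move: hp; rewrite hs ht.
  case: (f.1.2) => [|e p'] //= /and4P [/eqP es /eqP lt hpa _].
  exact: path_cross.
have X1 : \sum_(f <- F | (f.1.1.1 == v0) && (f.1.1.2 == v1)) f.2
    <= \sum_(f <- F | U01 f.1.2) f.2.
  apply: sum1_le => f fF.
  case e1: ((f.1.1.1 == v0) && (f.1.1.2 == v1)); last by case: ifP => _ //; exact: hd.
  by rewrite (pc f fF e1).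
have X2 : \sum_(f <- F | (f.1.1.1 == v0) && (f.1.1.2 == v1)) f.2
    + \sum_(f <- F | (f.1.1.1 == v0) && (f.1.1.2 == v0)) f.2
    + \sum_(f <- F | (f.1.1.1 == v1) && (f.1.1.2 == v1)) f.2
    <= \sum_(f <- F | U01 f.1.2) f.2
    + \sum_(f <- F | (f.1.1.1 == v0) && (f.1.1.2 == v0) && ~~ U01 f.1.2) f.2
    + \sum_(f <- F | (f.1.1.1 == v1) && (f.1.1.2 == v1) && ~~ U01 f.1.2) f.2.
  apply: sum3_le => f fF.
  have df := hd f fF.
  case e1: ((f.1.1.1 == v0) && (f.1.1.2 == v1)).
    rewrite (pc f fF e1).
    move: e1 => /andP [/eqP -> /eqP ->] /=; lra.
  case: (I2 f.1.1.1) => ->; case: (I2 f.1.1.2) => ->; rewrite /= ?andbF;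
    case: (U01 f.1.2) => /=; lra.
rewrite !hdem !mxE /= in X1 X2.
have e0 : (G v0 v0 + G v0 v1 = 3)%N.
  by rewrite -h0; congr (G _ _ + G _ _)%N; apply: val_inj.
have e1 : (G v0 v1 + G v1 v1 = 3)%N.
  by rewrite -h1; congr (G _ _ + G _ _)%N; apply: val_inj.
have hk1 : kappa * (1 - p) = kappa - 1 / 2 by rewrite mulrBr mulr1 hkp.
rewrite hk1 hkp in X1 X2.
rewrite hc in B1 B2 B3.
exact: (@arith R _ _ _ _ _ _ _ hk e0 e1 X1 X2 B1 B2 B3).
Qed.
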